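(* Work in $\mathrm{IKP} + \mathrm{PlUb}$. Let $\alpha$ be a thin ordinal and let $\beta, \gamma$ be ordinals with $\beta, \gamma \subseteq \alpha$. Then \[\gamma \subseteq \beta \leftrightarrow \gamma^{\mathrm{pl}} \subseteq \beta^{\mathrm{pl}}.\]
   Context: $\mathrm{IKP}$ is intuitionistic Kripke–Platek set theory (with strong infinity). An ordinal is a transitive set of transitive sets. An ordinal $\alpha$ is thin if for all $\beta, \gamma \in \alpha$, $\gamma \subseteq \beta \rightarrow (\gamma \in \beta \lor \gamma = \beta)$. For sets $\alpha,\gamma$, $\mathrm{relpl}_\alpha(\gamma)$ denotes $\forall \delta \in \gamma\ \forall \varepsilon \in \alpha\,(\varepsilon \subseteq \delta \rightarrow \varepsilon \in \gamma)$. $\mathrm{PlOrd}$ is the class of ordinals $\alpha$ such that for all $\beta \in \alpha$ and all $\gamma \subseteq \beta$ with $\mathrm{relpl}_\alpha(\gamma)$, we have $\gamma \in \alpha$ and $\forall \delta \in \alpha\,(\beta \in \delta \rightarrow \gamma \in \delta)$. $\mathrm{PlUb}$ is the axiom $\forall \alpha \in \mathrm{PlOrd}\ \exists \beta \in \mathrm{PlOrd}\ \alpha \in \beta$; under it each $\alpha \in \mathrm{PlOrd}$ has a plump successor $\alpha^{\mathrm{pl}+} = \mathcal{P}(\alpha)\cap\mathrm{PlOrd}$ which is a set. The plump operator $(-)^{\mathrm{pl}} : \mathrm{Ord} \to \mathrm{PlOrd}$ is defined by recursion as $\alpha^{\mathrm{pl}} = \bigcup_{\beta \in \alpha} (\beta^{\mathrm{pl}})^{\mathrm{pl}+}$.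 *)

(* Defs.v *)
(* Semantic formalization of the theory IKP + PlUb (intuitionistic Kripke-Platek
   set theory with strong infinity, plus the plump-unboundedness axiom),
   expanded by a function symbol [pl] for the plump operator (-)^pl. *)
From Stdlib Require Import Arith.

Set Implicit Arguments.

Inductive term : Type :=
| tvar : nat -> term
| tpl  : term -> term.

Inductive form : Type :=
| fmem : term -> term -> form
| feq  : term -> term -> form
| fbot : form
| fand : form -> form -> form
| for_ : form -> form -> form
| fimp : form -> form -> form
| fall : form -> form                (* forall x, p   (x = var 0) *)
| fex  : form -> form
| fball : term -> form -> form       (* forall x in t, p  (t in outer context) *)
| fbex  : term -> form -> form.

Definition pure_term (t : term) : Prop :=
  match t with tvar _ => True | tpl _ => False end.

Fixpoint delta0 (p : form) : Prop :=
  match p with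
  | fmem t u | feq t u => pure_term t /\ pure_term u
  | fbot => True
  | fand p q | for_ p q | fimp p q => delta0 p /\ delta0 q
  | fall _ | fex _ => False
  | fball t p | fbex t p => pure_term t /\ delta0 p
  end.

Definition scons {V : Type} (x : V) (env : nat -> V) : nat -> V :=
  fun n => match n with 0 => x | S k => env k end.

Section Sem.
Variables (V : Type) (mem : V -> V -> Prop) (pl : V -> V).

Fixpoint teval (env : nat -> V) (t : term) : V :=
  match t with
  | tvar n => env n
  | tpl t => pl (teval env t)
  end.

Fixpoint sat (env : nat -> V) (p : form) : Prop :=
  match p with
  | fmem t u => mem (teval env t) (teval env u)
  | feq t u => teval env t = teval env u
  | fbot => False
  | fand p q => sat env p /\ sat env q
  | for_ p q => sat env p \/ sat env q
  | fimp p q => sat env p -> sat env q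
  | fall p => forall x, sat (scons x env) p
  | fex p => exists x, sat (scons x env) p
  | fball t p => forall x, mem x (teval env t) -> sat (scons x env) p
  | fbex t p => exists x, mem x (teval env t) /\ sat (scons x env) p
  end.

Definition subset (x y : V) : Prop := forall z, mem z x -> mem z y.

Definition transitive (x : V) : Prop := forall y, mem y x -> subset y x.

Definition is_ord (x : V) : Prop :=
  transitive x /\ forall y, mem y x -> transitive y.

Definition thin (a : V) : Prop :=
  is_ord a /\
  forall b c, mem b a -> mem c a -> subset c b -> mem c b \/ c = b.

Definition relpl (a g : V) : Prop :=
  forall d, mem d g -> forall e, mem e a -> subset e d -> mem e g.

Definition PlOrd (a : V) : Prop :=
  is_ord a /\
  forall b, mem b a -> forall g, subset g b -> relpl a g ->
    mem g a /\ forall d, mem d a -> mem b d -> mem g d.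

Definition is_succ (y x : V) : Prop := forall z, mem z y <-> mem z x \/ z = x.
Definition is_empty (e : V) : Prop := forall z, ~ mem z e.
Definition Ind (a : V) : Prop :=
  (exists e, mem e a /\ is_empty e) /\
  forall x, mem x a -> exists y, mem y a /\ is_succ y x.

End Sem.

Record IKP_PlUb_model : Type := {
  V : Type;
  mem : V -> V -> Prop;
  pl : V -> V;
  ax_ext : forall x y, (forall z, mem z x <-> mem z y) -> x = y;
  ax_pair : forall x y, exists z, mem x z /\ mem y z;
  ax_union : forall x, exists z, forall y, mem y x -> forall w, mem w y -> mem w z;
  ax_strong_inf : exists a, Ind mem a /\
      forall b, Ind mem b -> forall x, mem x a -> mem x b;
  ax_sep : forall (p : form) (env : nat -> V) (a : V), delta0 p ->
      exists b, forall x, mem x b <-> (mem x a /\ sat mem pl (scons x env) p);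
  ax_coll : forall (p : form) (env : nat -> V) (a : V), delta0 p ->
      (forall x, mem x a -> exists y, sat mem pl (scons y (scons x env)) p) ->
      exists b, forall x, mem x a ->
        exists y, mem y b /\ sat mem pl (scons y (scons x env)) p;
  (* set induction scheme, for all formulas of the language {mem, pl} *)
  ax_ind : forall (p : form) (env : nat -> V),
      (forall x, (forall y, mem y x -> sat mem pl (scons y env) p) ->
                 sat mem pl (scons x env) p) ->
      forall x, sat mem pl (scons x env) p;
  ax_PlUb : forall a, PlOrd mem a -> exists b, PlOrd mem b /\ mem a b;
  (* defining equation of the plump operator on ordinals:
     x^pl = U_{y in x} (y^pl)^{pl+},  where  (y^pl)^{pl+} = P(y^pl) ∩ PlOrd *)
  ax_pl : forall x, is_ord mem x ->
      forall z, mem z (pl x) <-> exists y, mem y x /\ subset mem z (pl y) /\ PlOrd mem z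
}.

(* Main.v *)
Require Import Defs.
Set Implicit Arguments.

Section S.
Variable M : IKP_PlUb_model.
Notation mem := (mem M).
Notation pl := (pl M).
Notation sub := (subset mem).

Lemma ord_elem x y : is_ord mem x -> mem y x -> is_ord mem y.
Proof.
  intros [Tx Ex] Hy. split. apply Ex, Hy.
  intros z Hz. apply Ex. exact (Tx y Hy z Hz).
Qed.

Lemma pl_mono x y : is_ord mem x -> is_ord mem y -> sub x y -> sub (pl x) (pl y).
Proof.
  intros Ox Oy Hxy z Hz. apply (ax_pl M Oy). apply (ax_pl M Ox) in Hz.
  destruct Hz as [w [Hw [H1 H2]]]. exists w. auto.
Qed.

Lemma pl_PlOrd x : is_ord mem x -> PlOrd mem (pl x).
Proof.
  intros Ox.
  assert (TX : transitive mem (pl x)).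
  { intros z Hz w Hw. apply (ax_pl M Ox) in Hz. destruct Hz as [y [Hy [Hzy Pz]]].
    assert (Oy : is_ord mem y) by exact (@ord_elem x y Ox Hy).
    apply (ax_pl M Ox). exists y. split; [exact Hy|].
    pose proof (Hzy w Hw) as Hw'. apply (ax_pl M Oy) in Hw'.
    destruct Hw' as [y' [Hy' [Hwy' Pw]]]. split; [|exact Pw].
    intros u Hu. apply (@pl_mono _ _ (@ord_elem y y' Oy Hy') Oy).
    - intros v Hv. destruct Oy as [Ty _]. exact (Ty y' Hy' v Hv).
    - exact (Hwy' u Hu). }
  assert (OX : is_ord mem (pl x)).
  { split; [exact TX|]. intros z Hz. apply (ax_pl M Ox) in Hz.
    destruct Hz as [y [_ [_ [[Tz _] _]]]]. exact Tz. }
  split; [exact OX|].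
  intros be Hbe g Hg Hrel.
  pose proof Hbe as Hbe'. apply (ax_pl M Ox) in Hbe'.
  destruct Hbe' as [y [Hy [Hby Pb]]].
  assert (bsub : sub be (pl x)) by exact (TX be Hbe).
  split.
  - apply (ax_pl M Ox). exists y. split; [exact Hy|]. split.
    + intros u Hu. exact (Hby u (Hg u Hu)).
    +
      destruct Pb as [[Tb Eb] Pb].
      assert (Tg : transitive mem g).
      { intros d Hd e He. apply (Hrel d Hd e).
        - exact (TX d (bsub d (Hg d Hd)) e He).
        - exact (Eb d (Hg d Hd) e He). }
      split; [split; [exact Tg|]|].
      * intros d Hd. exact (Eb d (Hg d Hd)).
      * intros b' Hb' g' Hg' Hrel'.
        assert (Hdg : forall d, mem d g' -> mem d g) by (intros d Hd; exact (Tg b' Hb' d (Hg' d Hd))).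
        assert (Hrb : relpl mem be g').
        { intros d Hd e He Hed. apply (Hrel' d Hd e); [|exact Hed].
          exact (Hrel d (Hdg d Hd) e (bsub e He) Hed). }
        destruct (Pb b' (Hg b' Hb') g' Hg' Hrb) as [G1 G2].
        split.
        -- exact (Hrel b' Hb' g' (bsub g' G1) Hg').
        -- intros d Hd Hbd. exact (G2 d (Hg d Hd) Hbd).
  - intros d Hd Hbd. pose proof Hd as Hd'. apply (ax_pl M Ox) in Hd'.
    destruct Hd' as [_ [_ [_ [[Td Ed] Pd]]]].
    assert (Hgr : relpl mem d g).
    { intros f Hf e He Hef. exact (Hrel f Hf e (TX d Hd e He) Hef). }
    exact (proj1 (Pd be Hbd g Hg Hgr)).
Qed.

Lemma step a x d : thin mem a -> (forall g, mem g x -> mem g a) -> is_ord mem x ->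
  is_ord mem d -> sub d a -> sub (pl x) (pl d) ->
  (forall g, mem g x -> forall e, mem e a -> sub (pl g) (pl e) -> sub g e) -> sub x d.
Proof.
  intros Ha Hxa Ox Od Hda Hs IH g Hg.
  pose proof (@ord_elem x g Ox Hg) as Og.
  assert (H1 : mem (pl g) (pl x)).
  { apply (ax_pl M Ox). exists g. split; [exact Hg|]. split; [intros u h; exact h|].
    exact (pl_PlOrd Og). }
  apply Hs in H1. apply (ax_pl M Od) in H1. destruct H1 as [e [He [Hge _]]].
  pose proof (IH g Hg e (Hda e He) Hge) as Sge.
  destruct (proj2 Ha e g (Hda e He) (Hxa g Hg) Sge) as [H|H].
  - destruct Od as [Td _]. exact (Td e He g H).
  - subst. exact He.
Qed.

Definition Pf : form :=
  fimp (fmem (tvar 0) (tvar 1))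
    (fall (fimp (fmem (tvar 0) (tvar 2))
      (fimp (fball (tpl (tvar 1)) (fmem (tvar 0) (tpl (tvar 1))))
            (fball (tvar 1) (fmem (tvar 0) (tvar 1)))))).

Lemma Pf_iff a x : sat mem pl (scons x (fun _ => a)) Pf <->
  (mem x a -> forall e, mem e a -> sub (pl x) (pl e) -> sub x e).
Proof. cbn. unfold subset. tauto. Qed.

Lemma ind_all a : thin mem a -> forall x,
  mem x a -> forall e, mem e a -> sub (pl x) (pl e) -> sub x e.
Proof.
  intros Ha x. apply Pf_iff. revert x. apply (ax_ind M Pf (fun _ => a)).
  intros x IH. apply Pf_iff. intros Hx e He Hs.
  pose proof (proj1 (proj1 Ha)) as Ta.
  apply (@step a x e Ha).
  - exact (Ta x Hx).
  - exact (@ord_elem a x (proj1 Ha) Hx).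
  - exact (@ord_elem a e (proj1 Ha) He).
  - exact (Ta e He).
  - exact Hs.
  - intros g Hg. exact (proj1 (Pf_iff a g) (IH g Hg) (Ta x Hx g Hg)).
Qed.
End S.

Theorem lemma5p5 (M : IKP_PlUb_model) (a b c : V M) :
  thin (mem M) a -> is_ord (mem M) b -> is_ord (mem M) c ->
  subset (mem M) b a -> subset (mem M) c a ->
  (subset (mem M) c b <-> subset (mem M) (pl M c) (pl M b)).
Proof.
  intros Ha Ob Oc Hba Hca. split.
  - intros H. exact (@pl_mono M c b Oc Ob H).
  - intros H. apply (@step M a c b Ha Hca Oc Ob Hba H).
    intros g Hg. exact (@ind_all M a Ha g (Hca g Hg)).
Qed.
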